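(* Let $k,n\in\mathbb{N}$ with $k<n$, and let $A\in\mathbb{R}^{k\times k}$ and $B\in\mathbb{R}^{n\times n}$ be symmetric positive definite. Let $\iota_k:\mathbb{R}^k\hookrightarrow\mathbb{R}^n$ be any isometric embedding and set $B^{[\alpha]}:=\iota_k^*B^\alpha\iota_k$ for $\alpha\in\mathbb{R}$. Then for every $\alpha\in\mathbb{R}$ and all $j=1,\dots,k$, $$\lambda_j\big(B^{[\alpha/2]}AB^{[\alpha/2]}\big)\le\lambda_j\big((B^{[\alpha]})^{1/2}A(B^{[\alpha]})^{1/2}\big),$$ where $\lambda_1(\cdot)\le\lambda_2(\cdot)\le\dots$ denote eigenvalues in increasing order (with multiplicity). *)

(* Defs.v *)
From HB Require Import structures.
From mathcomp Require Import all_boot all_order all_algebra.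
From mathcomp Require Import boolp reals exp.
Set Implicit Arguments. Unset Strict Implicit. Unset Printing Implicit Defensive.
Import Order.TTheory GRing.Theory Num.Theory.
Local Open Scope ring_scope.

Definition orthogonalmx (R : realType) n (U : 'M[R]_n) : Prop :=
  U *m U^T = 1%:M.

Definition spd (R : realType) n (A : 'M[R]_n) : Prop :=
  A^T = A /\ forall v : 'rV[R]_n, v != 0 -> 0 < (v *m A *m v^T) 0 0.

Definition spec_decomp (R : realType) n (B : 'M[R]_n) (p : 'M[R]_n * 'rV[R]_n)
  : Prop :=
  orthogonalmx p.1 /\ (forall i, 0 < p.2 0 i) /\
  B = p.1^T *m diag_mx p.2 *m p.1.

(* real power B^a of a symmetric positive definite matrix, via its spectral
   decomposition: B^a = U^T diag(d_i^a) U (independent of the choice of the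
   decomposition).  Junk value 0 if B has no such decomposition. *)
Definition mpow (R : realType) n (B : 'M[R]_n) (a : R) : 'M[R]_n :=
  match pselect (exists p, spec_decomp B p) with
  | left h => let p := proj1_sig (cid h) in
      p.1^T *m diag_mx (map_mx (fun x => powR x a) p.2) *m p.1
  | right _ => 0
  end.

(* eigenvalues with multiplicity, in increasing order: the sorted list of
   roots of the characteristic polynomial (when it splits over R, as it does
   for symmetric matrices); junk value [::] otherwise. *)
Definition eigs (R : realType) n (M : 'M[R]_n) : seq R :=
  match pselect (exists s : seq R, sorted <=%R s /\
                   char_poly M = \prod_(x <- s) ('X - x%:P)) with
  | left h => proj1_sig (cid h)
  | right _ => [::]
  end.

(* lambda_{j+1}(M), 0-based index j *)
Definition eigval (R : realType) n (M : 'M[R]_n) (j : nat) : R :=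
  nth 0 (eigs M) j.

(* Main.v *)
Set Warnings "-notation-overridden,-ambiguous-paths,-notation-incompatible-prefix".
From HB Require Import structures.
From mathcomp Require Import all_boot all_order all_algebra.
From mathcomp Require Import boolp reals exp.
From mathcomp Require Import complex.
Require Import Defs.
From mathcomp Require Import ring lra zify.
Import Order.TTheory GRing.Theory Num.Theory.
Local Open Scope ring_scope.
Set Implicit Arguments. Unset Strict Implicit. Unset Printing Implicit Defensive.

Lemma char_poly_conj (F : fieldType) n (P A : 'M[F]_n) :
  P \in unitmx -> char_poly (invmx P *m A *m P) = char_poly A.
Proof.
move=> Pu; rewrite /char_poly /char_poly_mx.
set Pi := map_mx polyC (invmx P); set Pp := map_mx polyC P.
have PiPp : Pi *m Pp = 1%:M by rewrite -map_mxM mulVmx // map_mx1.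
have -> : 'X%:M = Pi *m 'X%:M *m Pp :> 'M_n.
  by rewrite -mulmxA -scalar_mxC mulmxA PiPp mul1mx.
rewrite map_mxM. rewrite map_mxM -/Pi -/Pp -mulmxBl -mulmxBr !det_mulmx mulrAC -det_mulmx.
by rewrite PiPp det1 mul1r -mulmxA -scalar_mxC mulmxA PiPp mul1mx.
Qed.

Lemma char_poly_diag (F : fieldType) n (d : 'rV[F]_n) :
  char_poly (diag_mx d) = \prod_(i < n) ('X - (d 0 i)%:P).
Proof.
rewrite char_poly_trig ?diag_mx_is_trig //.
by apply: eq_bigr => i _; rewrite mxE eqxx mulr1n.
Qed.

Section Real.
Variable R : realType.

Lemma real_split n (M : 'M[R]_n) : M^T = M ->
  exists s : seq R, char_poly M = \prod_(x <- s) ('X - x%:P).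
Proof.
move=> Msym.
pose f := real_complex R.
pose MC := map_mx f M.
have MCh : MC \is hermsymmx.
  apply: realsym_hermsym.
    apply/is_hermitianmxP; rewrite expr0 scale1r map_mx_id //.
    by rewrite /MC map_trmx Msym.
  apply/mxOverP => i j; rewrite mxE; apply/complex_realP; by exists (M i j).
have /orthomx_spectralP HM := hermitian_normalmx MCh.
have Hr := hermitian_spectral_diag_real MCh.
exists [seq @complex.Re R (spectral_diag MC 0 i) | i <- enum 'I_n].
apply: (@map_poly_inj _ _ f).
rewrite map_char_poly -/MC {1}HM char_poly_conj ?spectral_unit // char_poly_diag.
rewrite rmorph_prod big_map big_enum /=; apply: eq_bigr => i _.
rewrite rmorphB /= map_polyX map_polyC /= RRe_real //; exact: (mxOverP Hr 0 i).
Qed.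

Lemma eigs_prod n (M : 'M[R]_n) (s : seq R) :
  char_poly M = \prod_(x <- s) ('X - x%:P) -> eigs M = sort <=%R s.
Proof.
move=> Hs; rewrite /eigs; case: pselect => [h|hn]; last first.
  exfalso; apply: hn; exists (sort <=%R s); split; first exact: (sort_sorted (@le_total _ R)).
  by rewrite Hs; apply: perm_big; rewrite perm_sym perm_sort.
case: (cid h) => t [st Ht] /=.
apply: (sorted_eq le_trans le_anti) => //; first exact: (sort_sorted (@le_total _ R)).
apply: perm_trans (prod_XsubC_eq (etrans (esym Ht) Hs)) _.
by rewrite perm_sym perm_sort.
Qed.

Lemma eigs_cp n (M N : 'M[R]_n) : char_poly M = char_poly N -> eigs M = eigs N.
Proof. by move=> H; rewrite /eigs H. Qed.

Lemma sqnorm_sum n (w : 'rV[R]_n) : (w *m w^T) 0 0 = \sum_i w 0 i ^+ 2.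
Proof. by rewrite !mxE; apply: eq_bigr => i _; rewrite mxE expr2. Qed.

Lemma sqnorm_ge0 n (w : 'rV[R]_n) : 0 <= (w *m w^T) 0 0.
Proof. by rewrite sqnorm_sum; apply: sumr_ge0 => i _; exact: sqr_ge0. Qed.

Lemma sqnorm_gt0 n (w : 'rV[R]_n) : w != 0 -> 0 < (w *m w^T) 0 0.
Proof.
move=> wn0; rewrite lt_def sqnorm_ge0 andbT sqnorm_sum.
apply/negP => /eqP /psumr_eq0P H; move/negP: wn0; apply; apply/eqP/rowP => j.
rewrite mxE; apply/eqP; rewrite -sqrf_eq0; apply/eqP.
by apply: H => // k _; exact: sqr_ge0.
Qed.

Lemma sym_eigvec n (M : 'M[R]_n.+1) : M^T = M ->
  exists a (u : 'rV[R]_n.+1), (u *m u^T) 0 0 = 1 /\ u *m M = a *: u.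
Proof.
move=> Msym; have [s Hs] := real_split Msym.
have : size s = n.+1 by move: (size_char_poly M); rewrite Hs size_prod_XsubC => -[].
case: s Hs => // a s Hs _.
have : eigenvalue M a by rewrite eigenvalue_root_char Hs root_prod_XsubC mem_head.
case/eigenvalueP => v vM vn0.
have vp := sqnorm_gt0 vn0.
pose c := (Num.sqrt ((v *m v^T) 0 0))^-1.
exists a, (c *: v); split; last first.
  by rewrite -scalemxAl vM scalerA mulrC -scalerA.
rewrite linearZ /= -scalemxAl -scalemxAr 2!mxE mulrA -expr2 exprVn sqr_sqrtr ?ltW //.
by rewrite mulVf // gt_eqF.
Qed.

Lemma mul_e_tr m (x : 'rV[R]_m.+1) : ((delta_mx 0 0 : 'rV[R]_m.+1) *m x^T) 0 0 = x 0 0.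
Proof. by rewrite -rowE !mxE. Qed.

Lemma mul_tr_e m (x : 'rV[R]_m.+1) : (x *m (delta_mx 0 0 : 'rV[R]_m.+1)^T) 0 0 = x 0 0.
Proof. by rewrite trmx_delta -colE !mxE. Qed.

Lemma householder n (u : 'rV[R]_n.+1) : (u *m u^T) 0 0 = 1 ->
  exists H : 'M[R]_n.+1, [/\ H^T = H, H *m H = 1%:M & delta_mx 0 0 *m H = u].
Proof.
move=> u1; set e : 'rV[R]_n.+1 := delta_mx 0 0.
have [w0|wn0] := eqVneq (u - e) 0.
  exists 1%:M; split; first by rewrite trmx1.
    by rewrite mulmx1.
  by rewrite mulmx1; apply/esym/eqP; rewrite -subr_eq0 w0.
set w := u - e in wn0 *.
set c := (w *m w^T) 0 0.
have cp : 0 < c := sqnorm_gt0 wn0.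
have cE : c = - 2 * w 0 0.
  move: u1; rewrite /c !sqnorm_sum !big_ord_recl.
  under [in X in _ -> X]eq_bigr => i _ do rewrite /w !mxE /= subr0.
  rewrite /w !mxE eqxx /=.
  lra.
set k := 2 / c.
set W := w^T *m w.
have WW : W *m W = c *: W.
  by rewrite /W mulmxA -(mulmxA w^T) [w *m w^T]mx11_scalar mul_mx_scalar -scalemxAl.
exists (1%:M - k *: W); split.
- by rewrite linearB /= trmx1 linearZ /= /W trmx_mul trmxK.
- rewrite mulmxBl mul1mx mulmxBr mulmx1 -scalemxAl -scalemxAr WW scalerA.
  rewrite scalerA.
  have -> : k * k * c = k + k by rewrite /k; field; rewrite gt_eqF.
  rewrite scalerDl.
  have -> : k *: W - (k *: W + k *: W) = - (k *: W) by rewrite opprD addrA subrr sub0r.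
  by rewrite opprK subrK.
- rewrite mulmxBr mulmx1 -scalemxAr /W mulmxA [e *m w^T]mx11_scalar mul_scalar_mx.
  rewrite /e mul_e_tr -/e scalerA.
  have -> : k * w 0 0 = -1 by rewrite /k cE; field; rewrite cE in cp; lra.
  by rewrite scaleN1r opprK /w addrC subrK.
Qed.

Lemma lshift0 n : lshift n (0 : 'I_1) = 0 :> 'I_(1 + n).
Proof. exact: val_inj. Qed.

Lemma rshift_neq0 n (j : 'I_n) : (rshift 1 j == 0 :> 'I_(1 + n)) = false.
Proof. by []. Qed.

Lemma spectral_real n (M : 'M[R]_n) : M^T = M ->
  exists (U : 'M[R]_n) (d : 'rV[R]_n), U *m U^T = 1%:M /\ M = U^T *m diag_mx d *m U.
Proof.
elim: n M => [|n IH] M Msym.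
  exists 1%:M, 0; split; first by rewrite trmx1 mulmx1.
  by apply/matrixP => -[].
have [a [u [u1 uM]]] := sym_eigvec Msym.
have [H [Hsym HH eH]] := householder u1.
pose N := H *m M *m H.
have NE : N = H *m M *m H by [].
clearbody N.
have Nsym : N^T = N by rewrite NE !trmx_mul Hsym Msym mulmxA.
have eN : row 0 N = a *: delta_mx 0 0.
  rewrite rowE NE !mulmxA eH uM -!scalemxAl -eH -mulmxA HH mulmx1 //.
have N0 k : N 0 k = a * (k == 0)%:R.
  by move/matrixP: eN => /(_ 0 k); rewrite !mxE eqxx.
pose N' : 'M[R]_(1 + n) := N.
have ur : ursubmx N' = 0.
  by apply/matrixP => i j; rewrite !mxE (ord1 i) /N' /= lshift0 N0 rshift_neq0 mulr0.
have dl : dlsubmx N' = 0.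
  apply/matrixP => i j; rewrite !mxE (ord1 j) /N' /=.
  by rewrite -[N]Nsym mxE lshift0 N0 rshift_neq0 mulr0.
have ul : ulsubmx N' = a%:M.
  apply/matrixP => i j; rewrite !mxE (ord1 i) (ord1 j) /N' /=.
  by rewrite lshift0 N0 eqxx mulr1.
set M' := drsubmx N'.
have M'sym : M'^T = M' by rewrite /M' trmx_drsub /N' Nsym.
have [U' [d' [U'o M'E]]] := IH M' M'sym.
pose B : 'M[R]_(1 + n) := block_mx 1%:M 0 0 U'.
have BB : B *m B^T = 1%:M.
  by rewrite /B tr_block_mx mulmx_block !trmx0 trmx1 !mulmx0 !mul0mx !addr0 !add0r
    mulmx1 U'o -scalar_mx_block.
have Ddiag : diag_mx (const_mx a : 'rV[R]_1) = a%:M.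
  by apply/matrixP => i j; rewrite (ord1 i) (ord1 j) !mxE.
exists (B *m H), (row_mx (const_mx a : 'rV[R]_1) d'); split.
  by rewrite trmx_mul -mulmxA (mulmxA H) Hsym HH mul1mx BB.
have -> : M = H *m N *m H by rewrite NE !mulmxA HH mul1mx -mulmxA HH mulmx1.
have Nblk : B^T *m diag_mx (row_mx (const_mx a : 'rV[R]_1) d') *m B =
    block_mx a%:M 0 0 (U'^T *m diag_mx d' *m U').
  rewrite /B tr_block_mx diag_mx_row Ddiag !trmx0 trmx1 !mulmx_block.
  by rewrite !(mulmx0, mul0mx, mulmx1, mul1mx, addr0, add0r).
have -> : N = block_mx (a%:M : 'M_1) 0 0 M' by rewrite -ur -dl -ul /M' submxK.
rewrite M'E -Nblk trmx_mul Hsym.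
by rewrite !mulmxA.
Qed.

Lemma quad_diag n (y : 'rV[R]_n) (d : 'rV[R]_n) :
  (y *m diag_mx d *m y^T) 0 0 = \sum_i d 0 i * y 0 i ^+ 2.
Proof.
rewrite mul_mx_diag !mxE; apply: eq_bigr => i _; rewrite !mxE; ring.
Qed.

Lemma quad_orth n (V : 'M[R]_n) (e : 'rV[R]_n) (v : 'rV[R]_n) :
  V *m V^T = 1%:M ->
  (v *m (V^T *m diag_mx e *m V) *m v^T) 0 0 = \sum_i e 0 i * (v *m V^T) 0 i ^+ 2.
Proof.
move=> VV; rewrite -quad_diag; congr (_ 0 0).
by rewrite trmx_mul trmxK !mulmxA.
Qed.

Lemma norm_orth n (V : 'M[R]_n) (v : 'rV[R]_n) :
  V *m V^T = 1%:M -> (v *m v^T) 0 0 = \sum_i (v *m V^T) 0 i ^+ 2.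
Proof.
move=> VV; rewrite -sqnorm_sum; congr (_ 0 0).
by rewrite trmx_mul trmxK mulmxA -(mulmxA v) (mulmx1C VV) mulmx1.
Qed.

Lemma nz_row m n (A : 'M[R]_(m, n)) : A != 0 -> exists i, row i A != 0.
Proof.
move=> An0; have [i Hi|H] := pickP (fun i => row i A != 0); first by exists i.
move/eqP: An0; case; apply/row_matrixP => i; rewrite row0.
by apply/eqP; move: (H i) => /negbFE.
Qed.

Lemma rank_diag_le n (r : 'rV[R]_n) :
  (\rank (diag_mx r) <= \sum_(i < n | r ord0 i != 0%R) 1)%N.
Proof.
rewrite diag_mx_sum_delta (bigID (fun i => r 0 i != 0)) /=.
rewrite [X in (_ + X)%R]big1 ?addr0; last by move=> i /negPn/eqP ->; rewrite scale0r.
apply: (big_ind2 (fun (A : 'M[R]_n) (k : nat) => \rank A <= k)%N).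
- by rewrite mxrank0.
- move=> A k B l HA HB; apply: leq_trans (mxrank_add A B) _; exact: leq_add.
- move=> i _; rewrite -mul_scalar_mx; apply: leq_trans (mxrankM_maxr _ _) _.
  by rewrite mxrank_delta.
Qed.

Lemma count_enum_sum n (P : pred 'I_n) :
  count P (enum 'I_n) = (\sum_(i < n | P i) 1)%N.
Proof. by rewrite -sum1_count big_enum_cond. Qed.

Lemma count_prefix (s : seq R) j : sorted <=%R s -> (j < size s)%N ->
  (j.+1 <= count (fun x => (x <= nth 0 s j)%R) s)%N.
Proof.
move=> ss js; rewrite -[X in count _ X](cat_take_drop j.+1 s) count_cat.
apply: leq_trans (leq_addr _ _); apply: eq_leq; symmetry.
rewrite (eqP _ : count _ _ = size (take j.+1 s)); first by rewrite size_takel.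
rewrite -all_count; apply/allP => x /(nthP 0) [k].
rewrite size_takel // => kj <-; rewrite nth_take //.
by apply: (le_sorted_leq_nth 0 ss) => //; rewrite inE; apply: leq_ltn_trans js.
Qed.

Lemma count_suffix (s : seq R) j : sorted <=%R s -> (j < size s)%N ->
  (size s - j <= count (fun x => (nth 0 s j <= x)%R) s)%N.
Proof.
move=> ss js; rewrite -[X in count _ X](cat_take_drop j s) count_cat.
apply: leq_trans (leq_addl _ _); apply: eq_leq; symmetry.
rewrite (eqP _ : count _ _ = size (drop j s)); first by rewrite size_drop.
rewrite -all_count; apply/allP => x /(nthP 0) [k].
rewrite size_drop => kj <-; rewrite nth_drop //.
apply: (le_sorted_leq_nth 0 ss) => //; rewrite ?inE //; last by rewrite leq_addr.
by rewrite -ltn_subRL.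
Qed.

Lemma natfact1 a b n j : (a + b = n -> j < a -> b <= n - j.+1)%N.
Proof. lia. Qed.

Lemma natfact2 a b n j : (a + b = n -> n - j <= a -> b <= j)%N.
Proof. lia. Qed.

Lemma natfact3 r2 r1 n j : (r2 <= r1 -> r1 <= n - j.+1 -> j < n -> j < n - r2)%N.
Proof. lia. Qed.

Lemma natfact4 r2 r1 n j : (r2 <= r1 -> r1 <= j -> n - j <= n - r2)%N.
Proof. lia. Qed.

Lemma natfact5 c s a b n j : (s + c = a + b -> s <= n -> j < a -> n - j <= b -> 0 < c)%N.
Proof. lia. Qed.

Lemma eig_mono n (U V : 'M[R]_n) (d e : 'rV[R]_n) j :
  U *m U^T = 1%:M -> V *m V^T = 1%:M ->
  (forall v : 'rV[R]_n, (v *m (U^T *m diag_mx d *m U) *m v^T) 0 0 <=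
                        (v *m (V^T *m diag_mx e *m V) *m v^T) 0 0) ->
  (j < n)%N ->
  nth 0 (sort <=%R [seq d 0 i | i <- enum 'I_n]) j <=
  nth 0 (sort <=%R [seq e 0 i | i <- enum 'I_n]) j.
Proof.
move=> UU VV Hle jn.
set sd := sort <=%R [seq d 0 i | i <- enum 'I_n].
set se := sort <=%R [seq e 0 i | i <- enum 'I_n].
set lam := nth 0 sd j; set mu := nth 0 se j.
have szd : size sd = n by rewrite size_sort size_map size_enum_ord.
have sze : size se = n by rewrite size_sort size_map size_enum_ord.
have sortd : sorted <=%R sd := sort_sorted (@le_total _ R) _.
have sorte : sorted <=%R se := sort_sorted (@le_total _ R) _.
have c1 : (j.+1 <= \sum_(i < n | (e 0%R i <= mu)%R) 1)%N.
  have := count_prefix sorte (_ : (j < size se)%N); rewrite sze => /(_ jn).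
  by rewrite count_sort count_map count_enum_sum.
have c2 : (n - j <= \sum_(i < n | (lam <= d 0%R i)%R) 1)%N.
  have := count_suffix sortd (_ : (j < size sd)%N); rewrite szd => /(_ jn).
  by rewrite count_sort count_map count_enum_sum.
have tot (P : pred 'I_n) : (\sum_(i < n | P i) 1 + \sum_(i < n | ~~ P i) 1 = n)%N.
  transitivity (\sum_(i < n) 1)%N; last by rewrite sum1_card card_ord.
  by rewrite [RHS](bigID P) /=.
set E1 := diag_mx (\row_i ((~~ (e 0 i <= mu))%:R : R)).
set E2 := diag_mx (\row_i ((~~ (lam <= d 0 i))%:R : R)).
have rE1 : (\rank E1 <= n - j.+1)%N.
  apply: leq_trans (rank_diag_le _) _.
  rewrite (eq_bigl (fun i => ~~ (e 0 i <= mu))); last first.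
    by move=> i; rewrite mxE; case: (e 0 i <= mu); rewrite ?eqxx ?oner_eq0.
  exact: natfact1 (tot (fun i => e 0 i <= mu)) c1.
have rE2 : (\rank E2 <= j)%N.
  apply: leq_trans (rank_diag_le _) _.
  rewrite (eq_bigl (fun i => ~~ (lam <= d 0 i))); last first.
    by move=> i; rewrite mxE; case: (lam <= d 0 i); rewrite ?eqxx ?oner_eq0.
  exact: natfact2 (tot (fun i => lam <= d 0 i)) c2.
set S1 := kermx (V^T *m E1); set S2 := kermx (U^T *m E2).
have rS1 : (j.+1 <= \rank S1)%N.
  rewrite mxrank_ker; exact: natfact3 (mxrankM_maxr V^T E1) rE1 jn.
have rS2 : (n - j <= \rank S2)%N.
  rewrite mxrank_ker; exact: natfact4 (mxrankM_maxr U^T E2) rE2.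
have cap : (0 < \rank (S1 :&: S2)%MS)%N.
  exact: natfact5 (mxrank_sum_cap S1 S2) (rank_leq_col (S1 + S2)%MS) rS1 rS2.
have capn0 : (S1 :&: S2)%MS != 0 by rewrite -mxrank_eq0 -lt0n.
have [i vn0] := nz_row capn0; set v := row i (S1 :&: S2)%MS in vn0.
have := row_sub i (S1 :&: S2)%MS; rewrite -/v sub_capmx.
case/andP => /sub_kermxP v1 /sub_kermxP v2.
have y1 k : ~~ (e 0 k <= mu) -> (v *m V^T) 0 k = 0.
  move=> Hk; move/matrixP: v1 => /(_ 0 k).
  by rewrite mulmxA mul_mx_diag mxE [X in _ * X]mxE Hk /= mulr1n mulr1 => ->; rewrite mxE.
have y2 k : ~~ (lam <= d 0 k) -> (v *m U^T) 0 k = 0.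
  move=> Hk; move/matrixP: v2 => /(_ 0 k).
  by rewrite mulmxA mul_mx_diag mxE [X in _ * X]mxE Hk /= mulr1n mulr1 => ->; rewrite mxE.
have vp := sqnorm_gt0 vn0.
have h1 : (v *m (V^T *m diag_mx e *m V) *m v^T) 0 0 <= mu * (v *m v^T) 0 0.
  rewrite quad_orth // (norm_orth v VV) mulr_sumr; apply: ler_sum => k _.
  case: (boolP (e 0 k <= mu)) => Hk; first by rewrite ler_wpM2r // sqr_ge0.
  by rewrite y1 // expr2 !mulr0.
have h2 : lam * (v *m v^T) 0 0 <= (v *m (U^T *m diag_mx d *m U) *m v^T) 0 0.
  rewrite quad_orth // (norm_orth v UU) mulr_sumr; apply: ler_sum => k _.
  case: (boolP (lam <= d 0 k)) => Hk; first by rewrite ler_wpM2r // sqr_ge0.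
  by rewrite y2 // expr2 !mulr0.
by have := le_trans h2 (le_trans (Hle v) h1); rewrite ler_pM2r.
Qed.

Lemma orth_inv n (U : 'M[R]_n) : U *m U^T = 1%:M -> U \in unitmx /\ invmx U = U^T.
Proof.
move=> UU; have Uu : U \in unitmx := (mulmx1_unit UU).1.
split=> //; by rewrite -[invmx U]mulmx1 -UU mulmxA mulVmx // mul1mx.
Qed.

Lemma eigval_spec n (M U : 'M[R]_n) (d : 'rV[R]_n) j :
  U *m U^T = 1%:M -> M = U^T *m diag_mx d *m U ->
  eigval M j = nth 0 (sort <=%R [seq d 0 i | i <- enum 'I_n]) j.
Proof.
move=> UU ME; rewrite /eigval (@eigs_prod _ _ [seq d 0 i | i <- enum 'I_n]) //.
have [Uu Ui] := orth_inv UU.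
rewrite ME -Ui char_poly_conj // char_poly_diag big_map big_enum /=.
by apply: eq_bigl => i.
Qed.

Lemma sym_mono n (M N : 'M[R]_n) j : M^T = M -> N^T = N ->
  (forall v : 'rV[R]_n, (v *m M *m v^T) 0 0 <= (v *m N *m v^T) 0 0) ->
  (j < n)%N -> eigval M j <= eigval N j.
Proof.
move=> Ms Ns Hle jn.
have [U [d [UU ME]]] := spectral_real Ms.
have [V [e [VV NE]]] := spectral_real Ns.
rewrite (eigval_spec j UU ME) (eigval_spec j VV NE).
by apply: (eig_mono UU VV _ jn) => v; rewrite -ME -NE.
Qed.

Lemma e_diag_e n (d : 'rV[R]_n) (i : 'I_n) :
  ((delta_mx 0 i : 'rV[R]_n) *m diag_mx d *m (delta_mx 0 i : 'rV[R]_n)^T) 0 0 = d 0 i.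
Proof.
rewrite -rowE row_diag_mx -scalemxAl trmx_delta mul_delta_mx mxE !mxE eqxx /=.
by rewrite mulr1.
Qed.

Lemma spd_spec n (B : 'M[R]_n) : spd B ->
  exists (U : 'M[R]_n) (d : 'rV[R]_n),
    [/\ U *m U^T = 1%:M, (forall i, 0 < d 0 i), B = U^T *m diag_mx d *m U &
      forall a, mpow B a = U^T *m diag_mx (map_mx (fun x => powR x a) d) *m U].
Proof.
move=> [Bs Bp].
have ex : exists p, spec_decomp B p.
  have [U [d [UU BE]]] := spectral_real Bs.
  exists (U, d); split; first exact: UU.
  split; last exact: BE.
  move=> i /=.
  have UtU := mulmx1C UU.
  set w : 'rV[R]_n := delta_mx 0 i *m U.
  have wn0 : w != 0.
    apply/eqP => w0; have := e_diag_e (const_mx 1) i.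
    rewrite (_ : delta_mx 0 i *m diag_mx (const_mx 1) = w *m U^T).
      by rewrite w0 !mul0mx !mxE => /eqP; rewrite eq_sym oner_eq0.
    by rewrite /w -mulmxA UU mulmx1 diag_const_mx mulmx1.
  have := Bp w wn0.
  rewrite /w BE trmx_mul !mulmxA -(mulmxA _ U U^T) UU mulmx1.
  by rewrite -(mulmxA _ U U^T) UU mulmx1 e_diag_e.
rewrite /mpow; case: pselect => [h|//].
case: (cid h) => [[U d] [/= UU [dp BE]]].
by exists U, d; split.
Qed.

Lemma pw_facts n (U : 'M[R]_n) (d : 'rV[R]_n) (f : R -> 'M[R]_n) :
  U *m U^T = 1%:M -> (forall i, 0 < d 0 i) ->
  (forall a, f a = U^T *m diag_mx (map_mx (fun x => powR x a) d) *m U) ->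
  [/\ forall a b, f a *m f b = f (a + b), f 0 = 1%:M, f 1 = U^T *m diag_mx d *m U &
      forall a, (f a)^T = f a].
Proof.
move=> UU dp fE; split.
- move=> a b; rewrite !fE !mulmxA -(mulmxA _ U U^T) UU mulmx1 -(mulmxA U^T) mulmx_diag.
  congr (_ *m diag_mx _ *m _); apply/matrixP => i j; rewrite !mxE (ord1 i) powRD //; apply/implyP => _; by rewrite (gt_eqF (dp j)).

- rewrite fE (_ : map_mx _ d = const_mx 1); last by apply/matrixP => i j; rewrite !mxE powRr0.
  rewrite diag_const_mx mulmx1; exact: mulmx1C UU.
- rewrite fE (_ : map_mx _ d = d) //; apply/matrixP => i j; rewrite !mxE powRr1 //.
  by rewrite (ord1 i) ltW.
- by move=> a; rewrite fE !trmx_mul tr_diag_mx trmxK mulmxA.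
Qed.

Lemma sq_pd m n (X : 'M[R]_(m, n)) :
  (forall v : 'rV[R]_m, v *m X = 0 -> v = 0) ->
  forall v : 'rV[R]_m, v != 0 -> 0 < (v *m (X *m X^T) *m v^T) 0 0.
Proof.
move=> Xi v vn0; rewrite mulmxA -[v *m X *m X^T *m v^T]mulmxA -trmx_mul.
apply: sqnorm_gt0; apply/eqP => /Xi /eqP; exact/negP.
Qed.

Lemma pd_unit n (M : 'M[R]_n) :
  (forall v : 'rV[R]_n, v != 0 -> 0 < (v *m M *m v^T) 0 0) -> M \in unitmx.
Proof.
move=> Mp; rewrite -row_free_unit -kermx_eq0; apply/negPn/negP => Kn0.
have [i vn0] := nz_row Kn0.
have /sub_kermxP vM := row_sub i (kermx M).
by have := Mp _ vn0; rewrite vM mul0mx mxE ltxx.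
Qed.

Lemma cp_swap n (X Y : 'M[R]_n) : X \in unitmx ->
  char_poly (X *m Y) = char_poly (Y *m X).
Proof.
move=> Xu; rewrite -(char_poly_conj (X *m Y) Xu); congr char_poly.
by rewrite !mulmxA mulVmx // mul1mx.
Qed.

Lemma entryD (X Y : 'M[R]_1) : (X + Y) 0 0 = X 0 0 + Y 0 0.
Proof. by rewrite mxE. Qed.

Lemma proj_le n k (iota : 'M[R]_(n, k)) (z : 'rV[R]_n) : iota^T *m iota = 1%:M ->
  ((z *m iota) *m (z *m iota)^T) 0 0 <= (z *m z^T) 0 0.
Proof.
move=> hi; set p : 'M[R]_n := 1%:M - iota *m iota^T.
have pp : p *m p^T = p.
  rewrite /p linearB /= trmx1 trmx_mul trmxK mulmxBl mul1mx mulmxBr mulmx1.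
  by rewrite mulmxA -(mulmxA iota iota^T iota) hi mulmx1 subrr subr0.
have Heq : z *m z^T = (z *m iota) *m (z *m iota)^T + (z *m p) *m (z *m p)^T.
  rewrite (trmx_mul z p) mulmxA -(mulmxA z p) pp /p mulmxBr mulmx1 mulmxBl.
  by rewrite trmx_mul !mulmxA addrC subrK.
by rewrite Heq entryD lerDl sqnorm_ge0.
Qed.

End Real.

Unset Implicit Arguments.
Set Strict Implicit.
Set Printing Implicit Defensive.

Theorem lemma3p1 (R : realType) (k n : nat) (hkn : (k < n)%N)
  (A : 'M[R]_k) (B : 'M[R]_n) (hA : spd A) (hB : spd B)
  (iota : 'M[R]_(n, k)) (hiota : iota^T *m iota = 1%:M) (alpha : R) (j : 'I_k) :
  let Bb := fun a : R => iota^T *m mpow B a *m iota in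
  eigval (Bb (alpha / 2) *m A *m Bb (alpha / 2)) j <=
  eigval (mpow (Bb alpha) (1 / 2) *m A *m mpow (Bb alpha) (1 / 2)) j.
Proof.
cbv zeta; set Bb := fun a : R => iota^T *m mpow B a *m iota.
have [U [d [UU dp BE Bpow]]] := spd_spec hB.
pose F := fun a => U^T *m diag_mx (map_mx (fun x => powR x a) d) *m U.
have [fM f0 f1 fT] := @pw_facts _ _ _ _ F UU dp (fun a => erefl).
have FB a : mpow B a = F a by rewrite Bpow.
clearbody F.
have inj a (v : 'rV[R]_k) : v *m (iota^T *m F a) = 0 -> v = 0.
  move=> h; have : v *m iota^T *m F a *m F (- a) *m iota = 0.
    by rewrite -(mulmxA v iota^T) h !mul0mx.
  by rewrite -(mulmxA _ (F a)) (fM a (- a)) subrr f0 mulmx1 -mulmxA hiota mulmx1.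
have PE : Bb (alpha / 2) =
    (iota^T *m F (alpha / 2 / 2)) *m (iota^T *m F (alpha / 2 / 2))^T.
  by rewrite /Bb FB trmx_mul trmxK fT !mulmxA -(mulmxA _ (F (alpha / 2 / 2)) (F (alpha / 2 / 2))) (fM (alpha / 2 / 2)) -splitr.
have BaE : Bb alpha = (iota^T *m F (alpha / 2)) *m (iota^T *m F (alpha / 2))^T.
  by rewrite /Bb FB trmx_mul trmxK fT !mulmxA -(mulmxA _ (F (alpha / 2)) (F (alpha / 2))) (fM (alpha / 2)) -splitr.
set P := Bb (alpha / 2) in PE *.
set Ba := Bb alpha in BaE *.
have PE2 : P = iota^T *m F (alpha / 2) *m iota by rewrite /P /Bb FB.
clearbody P Ba.
have Psym : P^T = P by rewrite PE trmx_mul trmxK.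
have Pu : P \in unitmx.
  by apply: pd_unit => v vn0; rewrite PE; exact: (sq_pd (@inj _) vn0).
have hBa : spd Ba.
  split; first by rewrite BaE trmx_mul trmxK.
  by move=> v vn0; rewrite BaE; exact: (sq_pd (@inj _) vn0).
have [V [e [VV ep BaE' Bapow]]] := spd_spec hBa.
pose Gf := fun a => V^T *m diag_mx (map_mx (fun x => powR x a) e) *m V.
have [gM g0 g1 gT] := @pw_facts _ _ _ _ Gf VV ep (fun a => erefl).
set Q := mpow Ba (1 / 2).
have QE : Q = Gf (1 / 2) by rewrite /Q Bapow.
clearbody Q.
clearbody Gf.
have QQ : Q *m Q = Ba by rewrite QE (gM (1 / 2)) -splitr g1 BaE'.
have Qs : Q^T = Q by rewrite QE gT.
have Qu : Q \in unitmx.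
  by have /mulmx1_unit[] : Q *m Gf (- (1 / 2)) = 1%:M by rewrite QE (gM (1 / 2)) subrr g0.
have [W [c [WW cp AE Apow]]] := spd_spec hA.
pose Hf := fun a => W^T *m diag_mx (map_mx (fun x => powR x a) c) *m W.
have [hM h0 h1 hT] := @pw_facts _ _ _ _ Hf WW cp (fun a => erefl).
clearbody Hf.
set C := Hf (1 / 2).
have CC : C *m C = A by rewrite (hM (1 / 2)) -splitr h1 AE.
have Cs : C^T = C by rewrite hT.
have Cu : C \in unitmx.
  by have /mulmx1_unit[] : C *m Hf (- (1 / 2)) = 1%:M by rewrite (hM (1 / 2)) subrr h0.
have L : eigval (P *m A *m P) j = eigval (C *m P *m P *m C) j.
  rewrite /eigval (@eigs_cp _ _ _ (C *m P *m P *m C)) //.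
  have Xu : P *m C \in unitmx by rewrite unitmx_mul Pu Cu.
  have := cp_swap (C *m P) Xu.
  by rewrite !mulmxA -(mulmxA P C C) CC.
have R' : eigval (Q *m A *m Q) j = eigval (C *m Q *m Q *m C) j.
  rewrite /eigval (@eigs_cp _ _ _ (C *m Q *m Q *m C)) //.
  have Xu : Q *m C \in unitmx by rewrite unitmx_mul Qu Cu.
  have := cp_swap (C *m Q) Xu.
  by rewrite !mulmxA -(mulmxA Q C C) CC.
rewrite L R'; apply: sym_mono (ltn_ord j).
- by rewrite !trmx_mul Psym Cs !mulmxA.
- by rewrite !trmx_mul Qs Cs !mulmxA.
move=> v; set w := v *m C.
have e1 : v *m (C *m P *m P *m C) *m v^T = (w *m P) *m (w *m P)^T.
  by rewrite /w !trmx_mul Cs Psym !mulmxA.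
have e2 : v *m (C *m Q *m Q *m C) *m v^T = w *m Ba *m w^T.
  by rewrite /w !trmx_mul Cs -QQ !mulmxA.
rewrite e1 e2 BaE.
set z := w *m (iota^T *m F (alpha / 2)).
have -> : w *m P = z *m iota by rewrite PE2 /z !mulmxA.
have -> : w *m (iota^T *m F (alpha / 2) *m (iota^T *m F (alpha / 2))^T) *m w^T = z *m z^T.
  by rewrite /z (trmx_mul w) !mulmxA.
exact: proj_le hiota.
Qed.
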